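(* Suppose Assumption 1 holds. Let $x\in\operatorname{dom}\psi$, let $H$ be a symmetric matrix such that $Q \coloneqq Q^x_H$ is $\sigma$-strongly convex for some $\sigma>0$, and let $d$ satisfy the $\eta$-inexactness condition for $Q$ for some $\eta\in[0,1)$. Then, with $\Delta \coloneqq \nabla f(x)^Td + \psi(x+d)-\psi(x)$, $$\Delta \le -\frac12\left(\frac{1-\sqrt\eta}{1+\sqrt\eta}\,\sigma\|d\|^2 + d^THd\right) \le -\frac12\left(\frac{1-\sqrt\eta}{1+\sqrt\eta}\,\sigma + \lambda_{\min}(H)\right)\|d\|^2.$$ Moreover, if $(1-\sqrt\eta)\sigma + (1+\sqrt\eta)\lambda_{\min}(H) >0$, then for any $\beta,\gamma\in(0,1)$ the backtracking procedure that returns $\alpha=\beta^i$ for the smallest nonnegative integer $i$ with $F(x+\alpha d)\le F(x)+\alpha\gamma\Delta$ terminates after finitely many steps, and the returned $\alpha$ satisfies $$\alpha \ge \min\left\{1,\ \beta(1-\gamma)\frac{(1-\sqrt\eta)\sigma + (1+\sqrt\eta)\lambda_{\min}(H)}{L(1+\sqrt\eta)}\right\}.$$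
   Context: Problem setting: $F(x)=f(x)+\psi(x)$ on $\mathbb{R}^n$. Assumption 1: $f:\mathbb{R}^n\to\mathbb{R}$ is differentiable with $L$-Lipschitz continuous gradient for some $L>0$; $\psi:\mathbb{R}^n\to\mathbb{R}\cup\{+\infty\}$ is convex, proper and closed; $F$ is bounded below; and the solution set $\Omega=\{x: F(x)=F^*\}$, $F^*=\inf F$, is nonempty. For $x\in\mathbb{R}^n$ and a symmetric matrix $H$, $Q^x_H(d) \coloneqq \nabla f(x)^T d + \frac12 d^T H d + \psi(x+d) - \psi(x)$ (so $Q^x_H(0)=0$) and $Q^*\coloneqq\inf_d Q^x_H(d)$. A vector $d$ satisfies the $\eta$-inexactness condition (for $Q=Q^x_H$) if $Q(d)-Q^*\le \eta(Q(0)-Q^* )$, equivalently $Q(d)\le(1-\eta)Q^*$. $\lambda_{\min}(H)$ denotes the smallest eigenvalue of $H$. *)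

(* Defs.v *)
From mathcomp Require Import all_boot.
From Stdlib Require Import Reals Lra.
Open Scope R_scope.

Definition vec (n : nat) := 'I_n -> R.
Definition mat (n : nat) := 'I_n -> 'I_n -> R.

Definition vadd {n} (x y : vec n) : vec n := fun i => x i + y i.
Definition vsub {n} (x y : vec n) : vec n := fun i => x i - y i.
Definition vscale {n} (t : R) (x : vec n) : vec n := fun i => t * x i.
Definition dot {n} (x y : vec n) : R := \big[Rplus/0]_(i < n) (x i * y i).
Definition norm {n} (x : vec n) : R := sqrt (dot x x).
Definition matvec {n} (H : mat n) (x : vec n) : vec n :=
  fun i => \big[Rplus/0]_(j < n) (H i j * x j).
Definition quad {n} (H : mat n) (d : vec n) : R := dot d (matvec H d).
Definition mat_symmetric {n} (H : mat n) : Prop := forall i j, H i j = H j i.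

Definition is_eigenvalue {n} (H : mat n) (lam : R) : Prop :=
  exists v : vec n, (exists i, v i <> 0) /\ forall i, matvec H v i = lam * v i.
Definition is_lambda_min {n} (H : mat n) (lam : R) : Prop :=
  is_eigenvalue H lam /\ forall mu, is_eigenvalue H mu -> lam <= mu.

Inductive ereal := Fin (r : R) | PInf.
Definition ele (a b : ereal) : Prop :=
  match a, b with
  | _, PInf => True
  | PInf, Fin _ => False
  | Fin x, Fin y => x <= y
  end.
Definition elt (a b : ereal) : Prop :=
  match a, b with
  | Fin x, PInf => True
  | PInf, _ => False
  | Fin x, Fin y => x < y
  end.
Definition eadd_r (a : ereal) (r : R) : ereal :=
  match a with Fin x => Fin (x + r) | PInf => PInf end.
(* real value of a finite extended real (only used on finite values) *)
Definition eval_r (a : ereal) : R := match a with Fin x => x | PInf => 0 end.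

Definition has_gradient {n} (f : vec n -> R) (g : vec n -> vec n) : Prop :=
  forall x eps, 0 < eps -> exists delta, 0 < delta /\
    forall h : vec n, norm h < delta ->
      Rabs (f (vadd x h) - f x - dot (g x) h) <= eps * norm h.
Definition lipschitz {n} (g : vec n -> vec n) (L : R) : Prop :=
  forall x y, norm (vsub (g x) (g y)) <= L * norm (vsub x y).

Definition econvex {n} (p : vec n -> ereal) : Prop :=
  forall a b ra rb t, p a = Fin ra -> p b = Fin rb -> 0 <= t <= 1 ->
    ele (p (vadd (vscale t a) (vscale (1 - t) b))) (Fin (t * ra + (1 - t) * rb)).
Definition eproper {n} (p : vec n -> ereal) : Prop := exists x, p x <> PInf.
Definition eclosed {n} (p : vec n -> ereal) : Prop :=
  forall x c, elt (Fin c) (p x) -> exists delta, 0 < delta /\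
    forall y, norm (vsub y x) < delta -> elt (Fin c) (p y).
Definition strongly_convex {n} (Q : vec n -> ereal) (sigma : R) : Prop :=
  forall a b ra rb t, Q a = Fin ra -> Q b = Fin rb -> 0 <= t <= 1 ->
    ele (Q (vadd (vscale t a) (vscale (1 - t) b)))
        (Fin (t * ra + (1 - t) * rb - sigma / 2 * t * (1 - t) * (norm (vsub a b))^2)).

Definition Fobj {n} (f : vec n -> R) (psi : vec n -> ereal) (x : vec n) : ereal :=
  eadd_r (psi x) (f x).

Definition Qmodel {n} (gx : vec n) (H : mat n) (psi : vec n -> ereal) (x : vec n)
  (d : vec n) : ereal :=
  eadd_r (psi (vadd x d)) (dot gx d + / 2 * quad H d - eval_r (psi x)).

Definition is_inf {n} (Q : vec n -> ereal) (m : R) : Prop :=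
  (forall d, ele (Fin m) (Q d)) /\
  (forall eps, 0 < eps -> exists d, elt (Q d) (Fin (m + eps))).

Definition eta_inexact {n} (Q : vec n -> ereal) (eta : R) (d : vec n) : Prop :=
  exists Qstar, is_inf Q Qstar /\
    ele (Q d) (Fin (Qstar + eta * (eval_r (Q (fun _ => 0))- Qstar))).

Definition armijo {n} (f : vec n -> R) (psi : vec n -> ereal) (x d : vec n)
  (alpha gamma Delta : R) : Prop :=
  ele (Fobj f psi (vadd x (vscale alpha d)))
      (Fin (eval_r (Fobj f psi x) + alpha * gamma * Delta)).

(* Main.v *)
Require Import Defs.
From HB Require Import structures.
From mathcomp Require Import all_boot all_order all_algebra.
From mathcomp Require Import Rstruct.
From mathcomp.real_closed Require Import complex.
From Stdlib Require Import Reals Lra Classical FunctionalExtensionality.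
Import Order.TTheory GRing.Theory Num.Theory Num.Def.
Set Implicit Arguments. Unset Strict Implicit.
Section Spec.
Local Open Scope ring_scope.
Local Open Scope sesquilinear_scope.
Variables (n : nat) (H : mat n).
Hypothesis (Hsym : mat_symmetric H).
Notation RC := (real_complex R).
Definition Amx : 'M[R[i]]_n := \matrix_(i, j) RC (H i j).

Lemma Amx_herm : Amx \is hermsymmx.
Proof.
apply/is_hermitianmxP; rewrite expr0 scale1r; apply/matrixP => i j.
rewrite !mxE Hsym. exact: (esym (conjc_real _)).
Qed.

Lemma ReD : {morph (@complex.Re R) : x y / x + y}. Proof. by case=> ? ? [] ? ?. Qed.
Lemma ImD : {morph (@complex.Im R) : x y / x + y}. Proof. by case=> ? ? [] ? ?. Qed.
Lemma ReMr (z : R[i]) h : complex.Re (z * RC h) = complex.Re z * h.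
Proof. by case: z => a b /=; rewrite mulr0 subr0. Qed.
Lemma ImMr (z : R[i]) h : complex.Im (z * RC h) = complex.Im z * h.
Proof. by case: z => a b /=; rewrite mulr0 add0r mulrC. Qed.
Lemma ReMl (z : R[i]) h : complex.Re (RC h * z) = h * complex.Re z.
Proof. by case: z => a b /=; rewrite mul0r subr0. Qed.
Lemma ImMl (z : R[i]) h : complex.Im (RC h * z) = h * complex.Im z.
Proof. by case: z => a b /=; rewrite mul0r addr0. Qed.

Lemma real_eig (mu : R) (r : 'rV[R[i]]_n) : r != 0 -> r *m Amx = RC mu *: r ->
  is_eigenvalue H mu.
Proof.
move=> rn0 Hr.
have key : forall i, \sum_j r 0 j * RC (H j i) = RC mu * r 0 i.
  move=> i; move/matrixP: Hr => /(_ 0 i); rewrite !mxE => <-.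
  by apply: eq_bigr => j _; rewrite mxE.
pose a := fun i => complex.Re (r 0 i). pose b := fun i => complex.Im (r 0 i).
have Ea : forall i, matvec H a i = (mu * a i)%R.
  move=> i; have := congr1 (@complex.Re R) (key i).
  rewrite (big_morph _ ReD (erefl _)) ReMl => e.
  change (\sum_j H i j * a j = mu * a i); rewrite /a -e.
  apply: eq_bigr => j _; rewrite ReMr Hsym.
  exact: mulrC.
have Eb : forall i, matvec H b i = (mu * b i)%R.
  move=> i; have := congr1 (@complex.Im R) (key i).
  rewrite (big_morph _ ImD (erefl _)) ImMl => e.
  change (\sum_j H i j * b j = mu * b i); rewrite /b -e.
  apply: eq_bigr => j _; rewrite ImMr Hsym.
  exact: mulrC.
case: (classic (exists i, a i <> 0%R)) => [ha|ha].
  by exists a; split.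
exists b; split => //.
apply: NNPP => hb; move/eqP: rn0; apply; apply/matrixP => i j.
rewrite ord1 mxE.
have ai : a j = 0 by apply: NNPP => h; apply: ha; exists j.
have bi : b j = 0 by apply: NNPP => h; apply: hb; exists j.
move: ai bi; rewrite /a /b; case: (r 0 j) => x y /= -> ->; done.
Qed.
End Spec.

Section Spec2.
Local Open Scope ring_scope.
Local Open Scope sesquilinear_scope.
Variables (n : nat) (H : mat n) (lam : R).
Hypothesis (Hsym : mat_symmetric H) (Hlam : is_lambda_min H lam).
Notation RC := (real_complex R).

Lemma real_C (x : R[i]) : x \is Num.real -> x = RC (complex.Re x).
Proof.
case: x => a b /orP [h|h]; move: h; rewrite lecE /= => /andP [/eqP h _].
  by rewrite h.
by rewrite -h.
Qed.

Lemma quad_ge (d : vec n) : lam * dot d d <= quad H d.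
Proof.
pose A := @Amx n H.
have Aherm := @Amx_herm n H Hsym.
pose P := spectralmx A. pose D := spectral_diag A.
have HA : A = invmx P *m diag_mx D *m P := elimT (@orthomx_spectralP _ n A) (hermitian_normalmx Aherm).
have Pu : P \is unitarymx := spectral_unitarymx A.
have Punit : P \in unitmx := spectral_unit A.
have HPi : invmx P = P^t* := invmx_unitary Pu.
have Dreal : D \is a realmx := hermitian_spectral_diag_real Aherm.
have PA : P *m A = diag_mx D *m P.
  by rewrite HA !mulmxA mulmxV // mul1mx.
have DkR' : forall k, D 0 k = RC (complex.Re (D 0 k)).
  by move=> k; apply: real_C; exact: (mxOverP Dreal).
have Dk : forall k, lam <= complex.Re (D 0 k).
  move=> k.
  have DkR : D 0 k = RC (complex.Re (D 0 k)) by apply: real_C; exact: (mxOverP Dreal).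
  have eig : is_eigenvalue H (complex.Re (D 0 k)).
    apply: (@real_eig n H Hsym _ (row k P)).
      apply/negP => /eqP r0.
      have := congr1 (row k) (elimT unitarymxP Pu).
      rewrite row_mul r0 mul0mx => /matrixP /(_ 0 k); rewrite !mxE eqxx /=.
      by move/eqP; rewrite eq_sym oner_eq0.
    rewrite -row_mul PA row_mul row_diag_mx -DkR.
    by rewrite -scalemxAl -rowE.
  by apply/RleP; apply: (proj2 Hlam).
pose u : 'rV[R[i]]_n := \row_j RC (d j).
pose w := u *m P^t*.
have e1 : RC (quad H d) = (u *m A *m u^t*) 0 0.
  change (RC (\sum_i d i * \sum_j H i j * d j) = (u *m A *m u^t*) 0 0).
  rewrite rmorph_sum !mxE; apply: eq_bigr => i _.
  rewrite !mxE rmorphM rmorph_sum /= mulrC; congr (_ * _).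
    apply: eq_bigr => j _; rewrite !mxE rmorphM /= Hsym mulrC //.
  exact: (esym (conjc_real _)).
have e2 : RC (dot d d) = (u *m u^t*) 0 0.
  change (RC (\sum_i d i * d i) = (u *m u^t*) 0 0).
  rewrite rmorph_sum !mxE; apply: eq_bigr => i _.
  rewrite !mxE rmorphM /=; congr (_ * _).
  exact: (esym (conjc_real _)).
have e3 : u *m A *m u^t* = w *m diag_mx D *m w^t*.
  by rewrite HA HPi /w trmx_mul map_mxM trmxCK !mulmxA.
have e4 : u *m u^t* = w *m w^t*.
  by rewrite /w trmx_mul map_mxM trmxCK -HPi mulmxA -(mulmxA u) mulVmx // mulmx1.
have : 0 <= RC (quad H d - lam * dot d d).
  rewrite rmorphB rmorphM /= e1 e2 e3 e4 mul_mx_diag !mxE mulr_sumr -sumrB.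
  apply: sumr_ge0 => k _; rewrite !mxE.
  set z := (\sum_j _).
  rewrite mulrAC [RC lam * _]mulrC -mulrBr; apply: mulr_ge0; first exact: mulcJ_ge0.
  rewrite (DkR' k) -rmorphB /= ler0c subr_ge0; exact: Dk.
by rewrite ler0c subr_ge0.
Qed.
End Spec2.

Section V.
Local Open Scope ring_scope.
Variable n : nat.
Implicit Types a b c : vec n.
Lemma dot_comm a b : dot a b = dot b a.
Proof. change (\sum_i a i * b i = \sum_i b i * a i). apply: eq_bigr => i _; exact: mulrC. Qed.
Lemma dotDl a b c : dot (vadd a b) c = Rplus (dot a c) (dot b c).
Proof. change (\sum_i (a i + b i) * c i = \sum_i a i * c i + \sum_i b i * c i).
rewrite -big_split; apply: eq_bigr => i _; exact: mulrDl. Qed.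
Lemma dotBl a b c : dot (vsub a b) c = Rminus (dot a c) (dot b c).
Proof. change (\sum_i (a i - b i) * c i = \sum_i a i * c i - \sum_i b i * c i).
rewrite -sumrB; apply: eq_bigr => i _; exact: mulrBl. Qed.
Lemma dotZl t a b : dot (vscale t a) b = Rmult t (dot a b).
Proof. change (\sum_i (t * a i) * b i = t * \sum_i a i * b i).
rewrite mulr_sumr; apply: eq_bigr => i _; exact: (esym (mulrA _ _ _)). Qed.
Lemma dot0l b : dot (fun _ => R0) b = R0.
Proof. change (\sum_i (0 : R) * b i = 0). by rewrite big1 // => i _; rewrite mul0r. Qed.
Lemma dot_ge0 a : Rle 0 (dot a a).
Proof. apply/RleP; change (0 <= \sum_i a i * a i). apply: sumr_ge0 => i _; by rewrite -expr2 sqr_ge0. Qed.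
End V.
Open Scope R_scope.
Section V2.
Variable n : nat.
Implicit Types a b c : vec n.
Lemma dotDr a b c : dot c (vadd a b) = dot c a + dot c b.
Proof. rewrite dot_comm dotDl (dot_comm a) (dot_comm b); reflexivity. Qed.
Lemma dotZr t a b : dot b (vscale t a) = t * dot b a.
Proof. rewrite dot_comm dotZl (dot_comm a); reflexivity. Qed.
Lemma dotBr a b c : dot c (vsub a b) = dot c a - dot c b.
Proof. rewrite dot_comm dotBl (dot_comm a) (dot_comm b); reflexivity. Qed.
Lemma norm_sq a : norm a ^ 2 = dot a a.
Proof. unfold norm; apply pow2_sqrt; apply dot_ge0. Qed.
Lemma norm_ge0 a : 0 <= norm a.
Proof. apply sqrt_pos. Qed.
Lemma norm_scale t a : norm (vscale t a) = Rabs t * norm a.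
Proof.
unfold norm; rewrite dotZl dotZr.
replace (t * (t * dot a a)) with (Rsqr t * dot a a) by (unfold Rsqr; ring).
rewrite sqrt_mult_alt; [rewrite sqrt_Rsqr_abs; reflexivity|apply Rle_0_sqr].
Qed.
Lemma CS a b : Rabs (dot a b) <= norm a * norm b.
Proof.
set A := dot a a. set B := dot a b. set C := dot b b.
assert (Hq : forall t, 0 <= C + 2 * t * B + t * t * A).
{ intro t. pose proof (dot_ge0 (vadd b (vscale t a))) as h.
  rewrite dotDl !dotDr !dotZl !dotZr (dot_comm b a) in h. unfold A, B, C. lra. }
assert (HA : 0 <= A) by apply dot_ge0.
assert (HC : 0 <= C) by apply dot_ge0.
assert (HB : B * B <= A * C).
{ destruct (Req_dec A 0) as [h0|h0].
  - destruct (Req_dec B 0) as [hb|hb].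
    + rewrite hb h0; lra.
    + exfalso. pose proof (Hq (- (C + 1) / (2 * B))) as h.
      replace (C + 2 * (- (C + 1) / (2 * B)) * B + - (C + 1) / (2 * B) * (- (C + 1) / (2 * B)) * A)
        with (-1) in h by (rewrite h0; field; exact hb). lra.
  - assert (Ap : 0 < A) by lra.
    pose proof (Hq (- B / A)) as h.
    assert (e : A * (C + 2 * (- B / A) * B + - B / A * (- B / A) * A) = A * C - B * B)
      by (field; exact h0).
    pose proof (Rmult_le_pos _ _ HA h) as h2. rewrite e in h2. lra. }
unfold norm; fold A C B.
rewrite <- sqrt_mult_alt by exact HA.
rewrite <- sqrt_Rsqr_abs. apply sqrt_le_1_alt. unfold Rsqr; exact HB.
Qed.
End V2.
Section D.
Variable n : nat.
Lemma vadd_line (x h : vec n) s ds :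
  vadd (vadd x (vscale s h)) (vscale ds h) = vadd x (vscale (s + ds) h).
Proof. apply functional_extensionality => i; unfold vadd, vscale; ring. Qed.

Lemma deriv_line (f : vec n -> R) g x h s : has_gradient f g ->
  derivable_pt_lim (fun s => f (vadd x (vscale s h))) s (dot (g (vadd x (vscale s h))) h).
Proof.
intros Hg eps Heps.
set N := norm h. set y := vadd x (vscale s h).
assert (HN : 0 <= N) by apply norm_ge0.
assert (He : 0 < eps / (2 * (N + 1))) by (apply Rdiv_lt_0_compat; lra).
destruct (Hg y _ He) as [delta [Hd Hf]].
assert (Hdp : 0 < delta / (N + 1)) by (apply Rdiv_lt_0_compat; lra).
exists (mkposreal _ Hdp). simpl. intros ds Hds0 Hds.
fold y. rewrite <- vadd_line. fold y.
specialize (Hf (vscale ds h)).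
rewrite norm_scale dotZr in Hf. fold N in Hf.
assert (ha : 0 < Rabs ds) by (apply Rabs_pos_lt; exact Hds0).
assert (hlt : Rabs ds * N < delta).
{ apply Rle_lt_trans with (Rabs ds * (N + 1)). nra.
  apply (Rmult_lt_reg_r (/ (N + 1))). apply Rinv_0_lt_compat; lra.
  rewrite Rmult_assoc; rewrite Rinv_r; lra. }
specialize (Hf hlt).
set F := f (vadd y (vscale ds h)) in Hf *.
replace ((F - f y) / ds - dot (g y) h) with ((F - f y - ds * dot (g y) h) / ds) by (field; exact Hds0).
unfold Rdiv. rewrite Rabs_mult Rabs_inv.
apply Rle_lt_trans with (eps / (2 * (N + 1)) * (Rabs ds * N) * / Rabs ds).
{ apply Rmult_le_compat_r; [left; apply Rinv_0_lt_compat; lra | exact Hf]. }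
replace (eps / (2 * (N + 1)) * (Rabs ds * N) * / Rabs ds) with (eps * (N / (2 * (N + 1)))) by (field; lra).
assert (hq : N / (2 * (N + 1)) < 1).
{ apply (Rmult_lt_reg_r (2 * (N + 1))). lra. unfold Rdiv. rewrite Rmult_assoc; rewrite Rinv_l; lra. }
nra.
Qed.
End D.
Section D2.
Variable n : nat.
Lemma vadd0 (x : vec n) : vadd x (vscale 0 (fun _ => 0)) = x.
Proof. apply functional_extensionality => i; unfold vadd, vscale; ring. Qed.

Lemma descent (f : vec n -> R) g L : has_gradient f g -> lipschitz g L -> 0 <= L ->
  forall x h, f (vadd x h) <= f x + dot (g x) h + L / 2 * norm h ^ 2.
Proof.
intros Hg Hl HL x h.
set K := dot (g x) h. set N := norm h.
assert (HN : 0 <= N) by apply norm_ge0.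
pose k := fun s => f (vadd x (vscale s h)).
pose phi := fun s => k s - K * s - L / 2 * N ^ 2 * s ^ 2.
pose phi' := fun c => dot (g (vadd x (vscale c h))) h - K * 1 - L / 2 * N ^ 2 * (INR 2 * c ^ Nat.pred 2).
assert (Hd : forall c, 0 <= c <= 1 -> derivable_pt_lim phi c (phi' c)).
{ intros c _. unfold phi, phi'.
  apply (derivable_pt_lim_minus (fun s => k s - K * s) (fun s => L / 2 * N ^ 2 * s ^ 2)).
  - apply (derivable_pt_lim_minus k (fun s => K * s)).
    + apply deriv_line; exact Hg.
    + apply (derivable_pt_lim_scal id K c 1). apply derivable_pt_lim_id.
  - apply (derivable_pt_lim_scal (fun y => y ^ 2)). apply derivable_pt_lim_pow. }
destruct (MVT_cor2 phi phi' 0 1 Rlt_0_1 Hd) as [c [Hc [Hc0 Hc1]]].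
assert (Hp : phi' c <= 0).
{ unfold phi'. replace (INR 2) with 2 by (simpl; ring). simpl Nat.pred.
  set y := vadd x (vscale c h).
  assert (e1 : dot (g y) h - K = dot (vsub (g y) (g x)) h) by (rewrite dotBl; reflexivity).
  assert (e2 : vsub y x = vscale c h).
  { apply functional_extensionality => i; unfold y, vsub, vadd, vscale; ring. }
  pose proof (CS (vsub (g y) (g x)) h) as hcs. fold N in hcs.
  pose proof (Hl y x) as hl. rewrite e2 norm_scale Rabs_pos_eq in hl; [|lra]. fold N in hl.
  assert (h1 : dot (vsub (g y) (g x)) h <= L * (c * N) * N).
  { apply Rle_trans with (norm (vsub (g y) (g x)) * N).
    - apply Rle_trans with (Rabs (dot (vsub (g y) (g x)) h)); [apply Rle_abs|exact hcs].
    - apply Rmult_le_compat_r; [exact HN|exact hl]. }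
  nra. }
assert (H1 : phi 1 <= phi 0) by nra.
unfold phi, k in H1.
replace (vscale 0 h) with (fun _ : 'I_n => 0) in H1.
2:{ apply functional_extensionality => i; unfold vscale; ring. }
replace (vscale 1 h) with h in H1.
2:{ apply functional_extensionality => i; unfold vscale; ring. }
replace (vadd x (fun _ => 0)) with x in H1.
2:{ apply functional_extensionality => i; unfold vadd; ring. }
fold K. fold N. nra.
Qed.
End D2.

Lemma quad_geR n (H : mat n) lam : mat_symmetric H -> is_lambda_min H lam ->
  forall d, lam * dot d d <= quad H d.
Proof. intros Hs Hl d; apply/RleP; apply: quad_ge; assumption. Qed.

Lemma ele_fin_trans a A b : ele (Fin a) A -> ele A (Fin b) -> a <= b.
Proof. destruct A as [v|]; simpl; [lra|tauto]. Qed.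

Lemma ele_fin_ex A b : ele A (Fin b) -> exists v, A = Fin v /\ v <= b.
Proof. destruct A as [v|]; simpl; [intros; exists v; split; auto|tauto]. Qed.

Lemma min_nat (P : nat -> Prop) k : P k -> exists i, P i /\ forall j, (j < i)%nat -> ~ P j.
Proof.
induction k as [k IH] using (well_founded_induction Wf_nat.lt_wf).
intros Pk. destruct (classic (exists j, (j < k)%nat /\ P j)) as [[j [hj pj]]|hn].
- apply (IH j); [exact (elimT ssrnat.ltP hj) | exact pj].
- exists k; split; [exact Pk|]. intros j hj pj; apply hn; exists j; split; assumption.
Qed.
Lemma aux0 S qd m : 0 <= S -> qd <= m ->
  (forall t, 0 <= t <= 1 -> m <= t * qd - S / 2 * t * (1 - t)) -> qd <= - (S / 2).
Proof.
intros HS Hq Hsc. apply le_epsilon; intros eps he.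
set u := S + 2 * eps. assert (hu : 0 < u) by (unfold u; lra). assert (hud : u = S + 2 * eps) by reflexivity.
set t := S / u.
assert (ht0 : 0 <= t) by (unfold t; apply Rmult_le_pos; [lra|left; apply Rinv_0_lt_compat; lra]).
assert (e1 : 1 - t = 2 * eps / u) by (unfold t, u; field; lra).
assert (ht1 : t <= 1) by (assert (0 < 2*eps/u) by (apply Rdiv_lt_0_compat; lra); lra).
pose proof (Hsc t (conj ht0 ht1)) as h.
assert (h1 : (1 - t) * qd <= (1 - t) * (- (S / 2) * t)) by nra.
assert (hpos : 0 < 1 - t) by (rewrite e1; apply Rdiv_lt_0_compat; lra).
assert (h2 : qd <= - (S / 2) * t) by (apply (Rmult_le_reg_l (1 - t)); lra).
assert (e2 : - (S / 2) * t = - (S / 2) + S / 2 * (1 - t)) by ring.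
assert (h3 : S / 2 * (1 - t) <= eps).
{ rewrite e1. replace (S / 2 * (2 * eps / u)) with (eps * (S / u)) by (field; lra).
  assert (S / u <= 1).
  { apply (Rmult_le_reg_r u); [lra|]. unfold Rdiv; rewrite Rmult_assoc Rinv_l; lra. }
  nra. }
lra.
Qed.

Lemma auxr S qd m r : 0 <= S -> 0 < r < 1 -> qd <= m + r * r * (0 - m) ->
  m <= 1 / (1 + r) * qd - S / 2 * (1 / (1 + r)) * (1 - 1 / (1 + r)) ->
  qd <= - (S / 2 * ((1 - r) / (1 + r))).
Proof.
intros HS Hr Hq Hm.
assert (e : 1 / (1 + r) * qd - S / 2 * (1 / (1 + r)) * (1 - 1 / (1 + r))
           = ((1 + r) * qd - S / 2 * r) / ((1 + r) * (1 + r))) by (field; lra).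
rewrite e in Hm.
assert (h1 : (1 + r) * (1 + r) * m <= (1 + r) * qd - S / 2 * r).
{ apply (Rmult_le_compat_l ((1 + r) * (1 + r))) in Hm; [|nra].
  replace ((1 + r) * (1 + r) * (((1 + r) * qd - S / 2 * r) / ((1 + r) * (1 + r))))
    with ((1 + r) * qd - S / 2 * r) in Hm by (field; lra). exact Hm. }
assert (h2 : r * (1 + r) * qd <= - r * (1 - r) * S / 2) by nra.
assert (h3 : (1 + r) * qd <= - (1 - r) * S / 2).
{ apply (Rmult_le_reg_l r); [lra|]. nra. }
replace (- (S / 2 * ((1 - r) / (1 + r)))) with ((- (1 - r) * S / 2) / (1 + r)) by (field; lra).
apply (Rmult_le_reg_l (1 + r)); [lra|].
replace ((1 + r) * ((- (1 - r) * S / 2) / (1 + r))) with (- (1 - r) * S / 2) by (field; lra).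
exact h3.
Qed.

Lemma pow01 b j : 0 <= b <= 1 -> 0 <= b ^ j <= 1.
Proof. intros hb; induction j as [|j IH]; simpl; nra. Qed.


Unset Implicit Arguments.
Open Scope R_scope.

Theorem lemma3 (n : nat) (f : vec n -> R) (g : vec n -> vec n) (L : R)
  (psi : vec n -> ereal)
  (* Assumption 1 *)
  (HL : 0 < L) (Hgrad : has_gradient f g) (Hlip : lipschitz g L)
  (Hconv : econvex psi) (Hprop : eproper psi) (Hclosed : eclosed psi)
  (Hbdd : exists m : R, forall y, ele (Fin m) (Fobj f psi y))
  (Homega : exists xs : vec n, Fobj f psi xs <> PInf /\
                               forall y, ele (Fobj f psi xs) (Fobj f psi y))
  (* data of the lemma *)
  (x : vec n) (Hx : psi x <> PInf)
  (H : mat n) (Hsym : mat_symmetric H) (lam : R) (Hlam : is_lambda_min H lam)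
  (sigma : R) (Hsigma : 0 < sigma)
  (HQ : strongly_convex (Qmodel (g x) H psi x) sigma)
  (eta : R) (Heta : 0 <= eta < 1) (d : vec n)
  (Hd : eta_inexact (Qmodel (g x) H psi x) eta d) :
  let Delta := dot (g x) d + eval_r (psi (vadd x d)) - eval_r (psi x) in
  let c := (1 - sqrt eta) / (1 + sqrt eta) in
  (Delta <= - / 2 * (c * sigma * (norm d)^2 + quad H d) /\
   - / 2 * (c * sigma * (norm d)^2 + quad H d)
     <= - / 2 * (c * sigma + lam) * (norm d)^2) /\
  (0 < (1 - sqrt eta) * sigma + (1 + sqrt eta) * lam ->
   forall beta gamma, 0 < beta < 1 -> 0 < gamma < 1 ->
   exists i : nat,
     armijo f psi x d (beta ^ i) gamma Delta /\
     (forall j : nat, (j < i)%nat -> ~ armijo f psi x d (beta ^ j) gamma Delta) /\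
     Rmin 1 (beta * (1 - gamma) *
             (((1 - sqrt eta) * sigma + (1 + sqrt eta) * lam) / (L * (1 + sqrt eta))))
       <= beta ^ i).
Proof.
intros Delta c.
set r := sqrt eta in c |- *.
assert (Hr0 : 0 <= r) by apply sqrt_pos.
assert (Hrr : r * r = eta) by (apply sqrt_sqrt; lra).
assert (Hr1 : r < 1).
{ destruct (Rlt_le_dec r 1) as [h|h]; [exact h|]. nra. }
destruct (psi x) as [px|] eqn:Epx; [|congruence].
set Q := Qmodel (g x) H psi x in HQ Hd.
set N := norm d.
assert (HN : 0 <= N) by apply norm_ge0.
assert (Q0 : Q (fun _ => 0) = Fin 0).
{ unfold Q, Qmodel.
  replace (vadd x (fun _ : 'I_n => 0)) with x
    by (apply functional_extensionality => i; unfold vadd; ring).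
  rewrite Epx. simpl. f_equal.
  unfold quad. rewrite (dot_comm (g x)) !dot0l. ring. }
destruct Hd as [m [[Hinf1 Hinf2] Hdm]].
rewrite Q0 in Hdm. simpl eval_r in Hdm.
assert (Hm0 : m <= 0) by (pose proof (Hinf1 (fun _ => 0)) as h; rewrite Q0 in h; exact h).
destruct (ele_fin_ex Hdm) as [qd [Eqd Hqd]].
assert (Epd : exists pd, psi (vadd x d) = Fin pd).
{ unfold Q, Qmodel in Eqd. destruct (psi (vadd x d)) as [pd|]; [exists pd; reflexivity|discriminate]. }
destruct Epd as [pd Epd].
assert (Eq : qd = Delta + / 2 * quad H d).
{ unfold Q, Qmodel in Eqd. rewrite ?Epd ?Epx in Eqd. simpl in Eqd. injection Eqd as <-.
  unfold Delta. rewrite ?Epd ?Epx. simpl. ring. }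
assert (Hsc : forall t, 0 <= t <= 1 -> m <= t * qd - sigma / 2 * t * (1 - t) * N ^ 2).
{ intros t ht. pose proof (HQ d (fun _ => 0) qd 0 t Eqd Q0 ht) as h.
  replace (vsub d (fun _ : 'I_n => 0)) with d in h
    by (apply functional_extensionality => i; unfold vsub; ring).
  pose proof (ele_fin_trans (Hinf1 _) h) as h2. fold N in h2. lra. }
assert (Hkey : qd <= - / 2 * (c * sigma * N ^ 2)).
{ set SS := sigma * N ^ 2.
  assert (HS : 0 <= SS) by (unfold SS; apply Rmult_le_pos; [lra| apply pow2_ge_0]).
  destruct (Req_dec r 0) as [hr|hr].
  - assert (he : eta = 0) by (rewrite -Hrr hr; ring).
    rewrite he in Hqd.
    assert (h : qd <= - (SS / 2)).
    { apply (aux0 (m := m)); [exact HS|lra|].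
      intros t ht. pose proof (Hsc t ht) as h. unfold SS.
      replace (sigma * N ^ 2 / 2 * t * (1 - t)) with (sigma / 2 * t * (1 - t) * N ^ 2) by field.
      exact h. }
    replace (- / 2 * (c * sigma * N ^ 2)) with (- (SS / 2)); [exact h|].
    unfold c, SS; rewrite hr; field.
  - assert (hr' : 0 < r) by lra.
    assert (h : qd <= - (SS / 2 * ((1 - r) / (1 + r)))).
    { apply (auxr (m := m)); [exact HS|lra|rewrite Hrr; exact Hqd|].
      assert (ht : 0 <= 1 / (1 + r) <= 1).
      { split. apply Rlt_le, Rdiv_lt_0_compat; lra.
        apply (Rmult_le_reg_r (1 + r)); [lra|]. unfold Rdiv. rewrite Rmult_1_l Rinv_l; lra. }
      pose proof (Hsc _ ht) as h. unfold SS.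
      replace (sigma * N ^ 2 / 2 * (1 / (1 + r)) * (1 - 1 / (1 + r)))
        with (sigma / 2 * (1 / (1 + r)) * (1 - 1 / (1 + r)) * N ^ 2) by (field; lra).
      exact h. }
    replace (- / 2 * (c * sigma * N ^ 2)) with (- (SS / 2 * ((1 - r) / (1 + r)))); [exact h|].
    unfold c, SS; field; lra. }
assert (Hquad : lam * N ^ 2 <= quad H d).
{ unfold N; rewrite norm_sq; apply quad_geR; assumption. }
assert (HN2 : 0 <= N ^ 2) by apply pow2_ge_0.
assert (P1a : Delta <= - / 2 * (c * sigma * N ^ 2 + quad H d)) by lra.
assert (P1b : - / 2 * (c * sigma * N ^ 2 + quad H d) <= - / 2 * (c * sigma + lam) * N ^ 2) by nra.
split; [split; assumption|].
intros Hk beta gamma Hb Hg.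
set kap := (1 - r) * sigma + (1 + r) * lam in Hk |- *.
set bnd := (1 - gamma) * (kap / (L * (1 + r))).
assert (Hbnd : 0 < bnd).
{ unfold bnd. apply Rmult_lt_0_compat; [lra|]. apply Rdiv_lt_0_compat; [exact Hk|nra]. }
assert (Hck : c * sigma + lam = kap / (1 + r)) by (unfold c, kap; field; lra).
assert (HDel : Delta <= - / 2 * (kap / (1 + r)) * N ^ 2) by (rewrite -Hck; lra).
assert (HDe : Delta = dot (g x) d + pd - px) by (unfold Delta; rewrite ?Epd ?Epx; reflexivity).
assert (Harm : forall a, 0 <= a <= 1 -> a <= bnd -> armijo f psi x d a gamma Delta).
{ intros a ha hab. unfold armijo, Fobj. rewrite Epx. simpl eval_r.
  pose proof (Hconv (vadd x d) x pd px a Epd Epx ha) as hc.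
  replace (vadd (vscale a (vadd x d)) (vscale (1 - a) x)) with (vadd x (vscale a d)) in hc
    by (apply functional_extensionality => i; unfold vadd, vscale; ring).
  destruct (ele_fin_ex hc) as [pa [Epa hpa]]. rewrite Epa. simpl.
  pose proof (descent Hgrad Hlip (Rlt_le _ _ HL) x (vscale a d)) as hf.
  rewrite dotZr norm_scale Rabs_pos_eq in hf; [|lra]. fold N in hf.
  assert (haL : a * L <= (1 - gamma) * (kap / (1 + r))).
  { replace ((1 - gamma) * (kap / (1 + r))) with (bnd * L)
      by (unfold bnd; field; repeat split; lra). apply Rmult_le_compat_r; lra. }
  assert (hq1 : L / 2 * (a * N) ^ 2 <= a / 2 * ((1 - gamma) * (kap / (1 + r))) * N ^ 2).
  { replace (L / 2 * (a * N) ^ 2) with (a / 2 * (a * L) * N ^ 2) by field.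
    apply Rmult_le_compat_r; [exact HN2|]. apply Rmult_le_compat_l; lra. }
  assert (hq2 : a * (1 - gamma) * Delta <= a * (1 - gamma) * (- / 2 * (kap / (1 + r)) * N ^ 2)).
  { apply Rmult_le_compat_l; [nra|exact HDel]. }
  rewrite HDe in hq2 |- *. nra. }
assert (Hpow : forall j, 0 <= beta ^ j <= 1) by (intro j; apply pow01; lra).
destruct (pow_lt_1_zero beta (ltac:(rewrite Rabs_pos_eq; lra)) bnd Hbnd) as [j0 Hj0].
assert (Pj0 : armijo f psi x d (beta ^ j0) gamma Delta).
{ apply Harm; [apply Hpow|]. pose proof (Hj0 j0 (le_n _)) as h.
  rewrite Rabs_pos_eq in h; [lra|apply Hpow]. }
destruct (@min_nat (fun j => armijo f psi x d (beta ^ j) gamma Delta) j0 Pj0) as [i [Pi Hmin]].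
exists i; split; [exact Pi|split; [exact Hmin|]].
destruct i as [|i'].
- simpl. apply Rmin_l.
- apply Rle_trans with (beta * bnd); [apply Rle_trans with (beta * (1 - gamma) * (kap / (L * (1 + r)))); [apply Rmin_r| unfold bnd; rewrite Rmult_assoc; apply Rle_refl]|].
  assert (hi : bnd < beta ^ i').
  { destruct (Rlt_le_dec bnd (beta ^ i')) as [h|h]; [exact h|].
    exfalso. apply (Hmin i'); [by []|]. apply Harm; [apply Hpow|exact h]. }
  simpl. nra.
Qed.
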